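(* Let $\Delta=0$ be a passive orthonomic system as described in the context. Define the intrinsic multi-differential operators $\mathfrak{D}_K:\mathcal{B}\to\mathcal{B}$ by $\mathfrak{D}_KP=\widetilde{D_KP}$ for $P\in\mathcal{B}$, $K\in\mathbb{N}^p$. Then for all $K,L\in\mathbb{N}^p$, $\mathfrak{D}_K\mathfrak{D}_L=\mathfrak{D}_{K+L}$.
   Context: Jet space: coordinates $x_1,\dots,x_p$, $u^1,\dots,u^q$ and derivatives $u^j_K$, $K\in\mathbb{N}^p$ a multi-index. $\mathcal{A}$ is the ring of smooth functions of finitely many of these coordinates. Total derivatives $D_i=\partial/\partial x_i+\sum_{j,K}u^j_{K+e_i}\,\partial/\partial u^j_K$ ($e_i$ the $i$-th unit multi-index), $D_K=D_1^{K_1}\cdots D_p^{K_p}$. Choose $n$ pairs $(i^\alpha,J^\alpha)\in\{1,\dots,q\}\times\mathbb{N}^p$, $J^\alpha\neq0$. $u^j_K$ is principal if $(j,K)=(i^\alpha,J^\alpha+L)$ for some $\alpha,L$, otherwise parametric; $\mathcal{B}\subset\mathcal{A}$ consists of functions of the $x_i$ and parametric derivatives only. Fix a ranking $\le$: a total order on $\{1,\dots,q\}\times\mathbb{N}^p$ with $(j,K)\le(j,K+L)$ and $(i,J)\le(j,K)\iff(i,J+L)\le(j,K+L)$. The system is $u^{i^\alpha}_{J^\alpha}=P^\alpha$, $P^\alpha\in\mathcal{B}$, written $\Delta=0$ with $\Delta^\alpha=u^{i^\alpha}_{J^\alpha}-P^\alpha$; it is passive orthonomic if (i) $P^\alpha$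 depends only on $u^j_K$ with $(j,K)<(i^\alpha,J^\alpha)$, and (ii) $(i^\alpha,J^\alpha+K)=(i^\beta,J^\beta+L)$ implies $D_KP^\alpha=D_LP^\beta$ (modulo the system). For such systems every $Q\in\mathcal{A}$ has a unique reduced form $\widetilde{Q}\in\mathcal{B}$ with $\widetilde{Q}\equiv Q$ modulo the differential ideal generated by the $\Delta^\alpha$ (obtained by repeatedly substituting $u^{i^\alpha}_{J^\alpha+L}\mapsto D_LP^\alpha$ for the highest principal derivative). *)

(* Defs.v *)
From HB Require Import structures.
From mathcomp Require Import all_boot all_order all_algebra.
From mathcomp Require Import boolp classical_sets reals topology normedtype derive.
From mathcomp Require Import matrix_topology matrix_normedtype.
Import numFieldNormedType.Exports.
Set Implicit Arguments. Unset Strict Implicit. Unset Printing Implicit Defensive.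
Import Order.TTheory GRing.Theory Num.Theory.
Local Open Scope ring_scope.

Notation mindex p := {ffun 'I_p -> nat}.
Definition madd p (K L : mindex p) : mindex p := [ffun t => (K t + L t)%N].
Definition munit p (i : 'I_p) : mindex p := [ffun t => nat_of_bool (t == i)].

(* Jet coordinates: inl i = x_i ; inr (j, K) = u^j_K. *)
Notation coord p q := ('I_p + ('I_q * mindex p))%type.

Section Jet.
Variables (R : realType) (p q : nat).

Definition jet := coord p q -> R.

Fixpoint Ck (m k : nat) (f : 'rV[R]_m -> R) : Prop :=
  match k with
  | 0 => continuous f
  | k'.+1 => (forall x, differentiable f x) /\
             forall i : 'I_m, Ck k' ('D_(delta_mx 0 i) f)
  end.
Definition smooth m (f : 'rV[R]_m -> R) := forall k, Ck k f.

Definition restrict (S : seq (coord p q)) (z : jet) : 'rV[R]_(size S) :=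
  \row_(k < size S) z (tnth (in_tuple S) k).

Definition smooth_on (S : seq (coord p q)) (F : jet -> R) :=
  exists G : 'rV[R]_(size S) -> R, smooth G /\ forall z, F z = G (restrict S z).

Definition inA (F : jet -> R) := exists S, smooth_on S F.

Definition depends_on (S : seq (coord p q)) (F : jet -> R) :=
  forall z w : jet, (forall c, c \in S -> z c = w c) -> F z = F w.

Definition supp (F : jet -> R) : seq (coord p q) :=
  match pselect (exists S, depends_on S F) with
  | left h => projT1 (cid h)
  | right _ => [::]
  end.

Definition shift_coord (z : jet) (c : coord p q) (t : R) : jet :=
  fun d => if d == c then z d + t else z d.

Definition partial (c : coord p q) (F : jet -> R) (z : jet) : R :=
  derive1 (fun t : R => F (shift_coord z c t)) 0.

(* total derivative D_i = d/dx_i + sum_{j,K} u^j_{K+e_i} d/du^j_K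
   (finite sum, over the coordinates F depends on) *)
Definition Dtot (i : 'I_p) (F : jet -> R) : jet -> R := fun z =>
  partial (inl i) F z +
  \sum_(c <- undup (supp F))
     match c with
     | inl _ => 0
     | inr jK => z (inr (jK.1, madd jK.2 (munit i))) * partial c F z
     end.

Definition DK (K : mindex p) (F : jet -> R) : jet -> R :=
  foldr (fun i G => iter (K i) (Dtot i) G) F (enum 'I_p).

Section System.
Variables (n : nat) (ia : 'I_n -> 'I_q) (Ja : 'I_n -> mindex p)
          (P : 'I_n -> jet -> R).

Definition principal (c : coord p q) : bool :=
  match c with
  | inl _ => false
  | inr jK => [exists a, (ia a == jK.1) && [forall t, Ja a t <= jK.2 t]%N]
  end.

Definition inB (F : jet -> R) :=
  exists S, (forall c, c \in S -> ~~ principal c) /\ smooth_on S F.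

Definition Delta (a : 'I_n) : jet -> R :=
  fun z => z (inr (ia a, Ja a)) - P a z.

Definition in_ideal (Q : jet -> R) :=
  exists (m : nat) (c : 'I_m -> jet -> R) (al : 'I_m -> 'I_n) (L : 'I_m -> mindex p),
    (forall k, inA (c k)) /\
    forall z, Q z = \sum_(k < m) c k z * DK (L k) (Delta (al k)) z.

Definition reduced_form (Q Rf : jet -> R) :=
  inB Rf /\ in_ideal (fun z => Q z - Rf z).

Definition unique_reduced_forms :=
  forall Q, inA Q -> exists Rf, reduced_form Q Rf /\
     forall Rf', reduced_form Q Rf' -> Rf' = Rf.

Definition is_ranking (rk : rel ('I_q * mindex p)) :=
  [/\ reflexive rk, antisymmetric rk, transitive rk & total rk] /\
  (forall j K L, rk (j, K) (j, madd K L)) /\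
  (forall i J j K L, rk (i, J) (j, K) = rk (i, madd J L) (j, madd K L)).

Definition passive_orthonomic (rk : rel ('I_q * mindex p)) :=
  [/\ (forall a, Ja a != 0),
      is_ranking rk,
      (forall a, exists S,
          (forall c, c \in S -> ~~ principal c /\
             match c with
             | inl _ => True
             | inr jK => rk jK (ia a, Ja a) /\ jK != (ia a, Ja a)
             end) /\ smooth_on S (P a)) &
      (* (ii) integrability conditions, modulo the system *)
      (forall a b K L, (ia a, madd (Ja a) K) = (ia b, madd (Ja b) L) ->
          in_ideal (fun z => DK K (P a) z - DK L (P b) z))].
End System.
End Jet.

(* Main.v *)
Require Import Defs.
From HB Require Import structures.
From mathcomp Require Import all_boot all_order all_algebra.
From mathcomp Require Import boolp classical_sets functions reals topology normedtype derive.
From mathcomp Require Import matrix_topology matrix_normedtype.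
Import numFieldNormedType.Exports.
Set Implicit Arguments. Unset Strict Implicit. Unset Printing Implicit Defensive.
Import Order.TTheory GRing.Theory Num.Theory.
Local Open Scope ring_scope.
From mathcomp Require Import lra ring.
Import Defs.

Section CkLemmas.
Variable R : realType.

Lemma Ck_ext m k (f g : 'rV[R]_m -> R) : (forall x, f x = g x) -> Ck k f -> Ck k g.
Proof. by move=> /funext ->. Qed.

Lemma Ck_cont m k (f : 'rV[R]_m -> R) : Ck k f -> continuous f.
Proof. by case: k => [//|k] /= [d _] x; apply: differentiable_continuous. Qed.

Lemma Ck_mono m k (f : 'rV[R]_m -> R) : Ck k.+1 f -> Ck k f.
Proof.
elim: k f => [|k IH] f /=.
  by move=> [d _] x; apply: differentiable_continuous.
by move=> [d H]; split => // i; apply: IH; apply: H.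
Qed.

Lemma derive_lin m (f : 'rV[R]_m -> R) x v : differentiable f x ->
  'D_v f x = \sum_i v 0 i * 'D_('e_i) f x.
Proof.
move=> df; rewrite deriveE //.
under eq_bigr => i _ do rewrite deriveE //.
by rewrite {1}(row_sum_delta v) linear_sum; apply: eq_bigr => i _; rewrite linearZ.
Qed.

Lemma Ck_cst m k (c : R) : Ck k (fun _ : 'rV[R]_m => c).
Proof.
elim: k c => [|k IH] c /=; first exact: cst_continuous.
split => [x|i]; first exact: differentiable_cst.
by apply: Ck_ext (IH 0) => x; rewrite derive_cst.
Qed.

Lemma Ck_add m k (f g : 'rV[R]_m -> R) : Ck k f -> Ck k g -> Ck k (fun x => f x + g x).
Proof.
elim: k f g => [|k IH] f g /=.
  by move=> cf cg x; exact: (continuousD (cf x) (cg x)).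
move=> [df Hf] [dg Hg]; split => [x|i]; first exact: differentiableD.
apply: Ck_ext (IH _ _ (Hf i) (Hg i)) => x.
by rewrite (deriveD (diff_derivable (df x)) (diff_derivable (dg x))).
Qed.

Lemma Ck_mul m k (f g : 'rV[R]_m -> R) : Ck k f -> Ck k g -> Ck k (fun x => f x * g x).
Proof.
elim: k f g => [|k IH] f g /=.
  by move=> cf cg x; exact: (continuousM (cf x) (cg x)).
move=> [df Hf] [dg Hg]; split => [x|i]; first exact: differentiableM.
have Cf : Ck k f by apply: Ck_mono; split.
have Cg : Ck k g by apply: Ck_mono; split.
apply: Ck_ext (Ck_add (IH _ _ Cf (Hg i)) (IH _ _ Cg (Hf i))) => x.
by rewrite (deriveM (diff_derivable (df x)) (diff_derivable (dg x))).
Qed.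

Lemma Ck_sum m k (I : Type) (s : seq I) (F : I -> 'rV[R]_m -> R) :
  (forall i, Ck k (F i)) -> Ck k (fun x => \sum_(i <- s) F i x).
Proof.
move=> H; elim: s => [|a s IH].
  by apply: Ck_ext (Ck_cst _ _ 0) => x; rewrite big_nil.
by apply: Ck_ext (Ck_add (H a) IH) => x; rewrite big_cons.
Qed.

Definition coordf m (j : 'I_m) (x : 'rV[R]_m) : R := x 0 j.

Lemma coordf_linear m j : linear (@coordf m j).
Proof. by move=> a u v; rewrite /coordf !mxE. Qed.

Lemma coordf_diff m j x : differentiable (@coordf m j) x /\ forall v, 'D_v (@coordf m j) x = v 0 j.
Proof.
pose gM := GRing.isLinear.Build _ _ _ _ _ (coordf_linear j).
pose gL : {linear 'rV[R]_m -> R^o} := HB.pack (@coordf m j) gM.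
have cg : continuous gL by apply: coord_continuous.
split; first exact: (@linear_differentiable _ _ _ gL x cg).
move=> v; rewrite deriveE; last exact: (@linear_differentiable _ _ _ gL x cg).
by rewrite (@diff_lin _ _ _ gL x cg).
Qed.

Lemma Ck_coord m k (j : 'I_m) : Ck k (fun x : 'rV[R]_m => x 0 j).
Proof.
case: k => [|k] /=; first exact: coord_continuous.
split => [x|i]; first exact: (coordf_diff j x).1.
apply: Ck_ext (Ck_cst _ _ ('e_i 0 j)) => x.
by rewrite (coordf_diff j x).2.
Qed.

End CkLemmas.

Section Sel.
Variable R : realType.

Definition sel m m' (f : 'I_m' -> 'I_m) (x : 'rV[R]_m) : 'rV[R]_m' := \row_k x 0 (f k).

Lemma sel_linear m m' (f : 'I_m' -> 'I_m) : linear (sel f).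
Proof. by move=> a u v; apply/rowP => k; rewrite !mxE. Qed.

Lemma sel_cont m m' (f : 'I_m' -> 'I_m) : continuous (sel f).
Proof.
move=> u A /nbhs_ballP[e /= e0 eA].
apply/nbhs_ballP; exists e => //= v [_ uv]; apply: eA; split => // i j.
by apply: (le_lt_trans _ (uv i (f j))); rewrite !mxE (ord1 i).
Qed.

Lemma sel_diff m m' (f : 'I_m' -> 'I_m) x : differentiable (sel f) x.
Proof.
pose gM := GRing.isLinear.Build _ _ _ _ _ (sel_linear f).
pose gL : {linear 'rV[R]_m -> 'rV[R]_m'} := HB.pack (sel f) gM.
have cg : continuous gL by exact: sel_cont.
exact: (@linear_differentiable _ _ _ gL x cg).
Qed.

Lemma derive_sel m m' (f : 'I_m' -> 'I_m) (g : 'rV[R]_m' -> R) x v :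
  'D_v (fun y => g (sel f y)) x = 'D_(sel f v) g (sel f x).
Proof.
rewrite /derive; set d := (fun _ : R => _); set d' := (fun _ : R => _).
suff -> : d = d' by [].
apply: funext => h; rewrite /d /d' /=.
congr (_ *: (g _ - _)); apply/rowP => k; rewrite !mxE //.
Qed.

Lemma Ck_sel m m' k (f : 'I_m' -> 'I_m) (g : 'rV[R]_m' -> R) :
  Ck k g -> Ck k (fun y => g (sel f y)).
Proof.
elim: k g => [|k IH] g /=.
  by move=> cg x; apply: continuous_comp; [exact: sel_cont | exact: cg].
move=> [dg Hg]; split => [x|i].
  exact: (differentiable_comp (sel_diff f x) (dg _)).
apply: Ck_ext (Ck_sum (index_enum 'I_m') (fun j => Ck_mul (Ck_cst _ _ (sel f 'e_i 0 j)) (IH _ (Hg j)))) => x.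
by rewrite derive_sel derive_lin.
Qed.

End Sel.

Section Schwarz.
Variable R : realType.

Lemma cont_eps m (A : 'rV[R]_m -> R) a e : {for a, continuous A} -> 0 < e ->
  exists2 d, 0 < d & forall x, `|x - a| < d -> `|A x - A a| < e.
Proof.
move=> cA e0; move/cvgrPdist_lt: cA => /(_ e e0) /nbhs_ballP [d d0 H].
exists d => // x xa; rewrite distrC; apply: (H x).
by rewrite -ball_normE /= distrC.
Qed.

Lemma line_fun m (G : 'rV[R]_m -> R) u c s :
  (fun h : R => h^-1 *: (((fun s => G (s *: u + c)) \o shift s) (h *: 1) - G (s *: u + c))) =
  (fun h : R => h^-1 *: ((G \o shift (s *: u + c)) (h *: u) - G (s *: u + c))).
Proof.
apply: funext => h /=; congr (_ *: (G _ - _)).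
by rewrite /shift /= scalerDl addrA [h *: 1]mulr1.
Qed.

Lemma line_is_derive m (G : 'rV[R]_m -> R) u c s :
  differentiable G (s *: u + c) ->
  is_derive s 1 (fun s => G (s *: u + c)) ('D_u G (s *: u + c)).
Proof.
move=> dG; have dv := diff_derivable (v := u) dG.
split; rewrite /derivable /derive line_fun //.
Qed.


Lemma mvt0 (f df : R -> R) (h : R) : 0 <= h -> (forall s : R, is_derive s (1:R) f (df s)) ->
  exists2 c, 0 <= c <= h & f h - f 0 = df c * h.
Proof.
move=> h0 H.
have cf : continuous f.
  move=> x; apply: differentiable_continuous; apply/derivable1_diffP.
  exact: (@ex_derive _ _ _ _ _ _ _ (H x)).
have [c cin E] := MVT_segment h0 (fun x _ => H x) (continuous_subspaceT cf).
exists c; last by rewrite E subr0.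
by move: cin; rewrite in_itv /=.
Qed.

Lemma mixed_step m (G : 'rV[R]_m -> R) u v a h : 0 <= h ->
  (forall x, differentiable G x) -> (forall x, differentiable ('D_u G) x) ->
  exists s, exists t, [/\ 0 <= s <= h, 0 <= t <= h &
    G (h *: u + h *: v + a) - G (h *: u + a) - G (h *: v + a) + G a =
    h * h * 'D_v ('D_u G) (s *: u + t *: v + a)].
Proof.
move=> h0 dG dDG.
pose psi := fun s : R => G (s *: u + (h *: v + a)) - G (s *: u + a).
have psiD (s : R) : is_derive s (1:R) psi ('D_u G (s *: u + (h *: v + a)) - 'D_u G (s *: u + a)).
  by apply: is_deriveB; apply: line_is_derive.
have [s sin Es] := mvt0 h0 psiD.
pose chi := fun t : R => 'D_u G (t *: v + (s *: u + a)).
have chiD (t : R) : is_derive t (1:R) chi ('D_v ('D_u G) (t *: v + (s *: u + a))).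
  exact: line_is_derive.
have [t tin Et] := mvt0 h0 chiD.
exists s, t; split => //.
have e1 : h *: u + h *: v + a = h *: u + (h *: v + a) by rewrite addrA.
have e2 : (0:R) *: u + (h *: v + a) = h *: v + a by rewrite scale0r add0r.
have e3 : (0:R) *: u + a = a by rewrite scale0r add0r.
have e4 : h *: v + (s *: u + a) = s *: u + (h *: v + a) by rewrite addrCA.
have e5 : (0:R) *: v + (s *: u + a) = s *: u + a by rewrite scale0r add0r.
have e6 : t *: v + (s *: u + a) = s *: u + t *: v + a by rewrite addrCA addrA.
transitivity (psi h - psi 0); first by rewrite /psi e1 e2 e3; lra.
rewrite Es.
have -> : 'D_u G (s *: u + (h *: v + a)) - 'D_u G (s *: u + a) = chi h - chi 0.
  by rewrite /chi e4 e5.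
rewrite Et e6; ring.
Qed.


Lemma pt_close m (u v a : 'rV[R]_m) s t h : 0 <= s <= h -> 0 <= t <= h ->
  `|s *: u + t *: v + a - a| <= h * (`|u| + `|v|).
Proof.
move=> /andP[s0 sh] /andP[t0 th]; rewrite addrK.
apply: (le_trans (ler_normD _ _)); rewrite !normrZ !ger0_norm // mulrDr.
by apply: lerD; apply: ler_wpM2r.
Qed.

Lemma close2 (x y z w e : R) : y = z -> `|y - x| < e / 2 -> `|z - w| < e / 2 ->
  `|x - w| < e.
Proof.
move=> -> h1 h2.
have -> : x - w = - (z - x) + (z - w) by rewrite opprB addrA subrK.
apply: (le_lt_trans (ler_normD _ _)); rewrite normrN (splitr e).
exact: ltrD.
Qed.

Lemma schwarz m (G : 'rV[R]_m -> R) u v a :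
  (forall x, differentiable G x) -> (forall x, differentiable ('D_u G) x) ->
  (forall x, differentiable ('D_v G) x) ->
  continuous ('D_v ('D_u G)) -> continuous ('D_u ('D_v G)) ->
  'D_v ('D_u G) a = 'D_u ('D_v G) a.
Proof.
move=> dG dGu dGv cA cB.
set A := 'D_v ('D_u G); set B := 'D_u ('D_v G).
have key h : 0 < h -> exists p, exists q,
    [/\ `|p - a| <= h * (`|u| + `|v|), `|q - a| <= h * (`|u| + `|v|) & A p = B q].
  move=> h0; have h0' := ltW h0.
  have [s [t [sin tin E1]]] := @mixed_step _ G u v a h h0' dG dGu.
  have [s' [t' [sin' tin' E2]]] := @mixed_step _ G v u a h h0' dG dGv.
  exists (s *: u + t *: v + a), (s' *: v + t' *: u + a); split.
  - exact: pt_close.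
  - by rewrite [`|u| + _]addrC; apply: pt_close.
  - have hh : h * h != 0 by rewrite mulf_neq0 // gt_eqF.
    have M : G (h *: u + h *: v + a) - G (h *: u + a) - G (h *: v + a) + G a =
             G (h *: v + h *: u + a) - G (h *: v + a) - G (h *: u + a) + G a.
      have -> : h *: v + h *: u + a = h *: u + h *: v + a by rewrite (addrC (h *: v)).
      by congr (_ + _); exact: addrAC.
    exact: (mulfI hh (etrans (esym E1) (etrans M E2))).
apply/eqP; rewrite -subr_eq0 -normr_eq0; apply/negPn/negP => nz.
have d0 : 0 < `|A a - B a| by rewrite lt0r nz normr_ge0.
set d := `|A a - B a| in d0 nz.
have e0 : 0 < d / 2 by rewrite divr_gt0.
have [dA dA0 HA] := cont_eps (cA a) e0.
have [dB dB0 HB] := cont_eps (cB a) e0.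
set N := `|u| + `|v| + 1.
have N0 : 0 < N by rewrite /N ltr_wpDl // addr_ge0.
set h := Num.min dA dB / (2 * N).
have mn0 : 0 < Num.min dA dB by rewrite lt_min dA0 dB0.
have h0 : 0 < h by rewrite divr_gt0 // mulr_gt0.
have hN : h * (`|u| + `|v|) < Num.min dA dB.
  apply: (le_lt_trans (y := h * N)).
    by apply: ler_wpM2l; [exact: ltW | rewrite /N lerDl].
  rewrite /h; move: mn0; set M := Num.min dA dB => mn0.
  have -> : M / (2 * N) * N = M / 2.
    by rewrite invfM -!mulrA mulVf ?gt_eqF // mulr1.
  by rewrite ltr_pdivrMr // ltr_pMr // ltr1n.
have [p [q [pa qa Epq]]] := key h h0.
have pA : `|A p - A a| < d / 2.
  by apply: HA; apply: (le_lt_trans pa); apply: (lt_le_trans hN); rewrite ge_min lexx.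
have qB : `|B q - B a| < d / 2.
  by apply: HB; apply: (le_lt_trans qa); apply: (lt_le_trans hN); rewrite ge_min lexx orbT.
have := close2 Epq pA qB.
by rewrite -/d ltxx.
Qed.


Lemma Ck_Dv m k (G : 'rV[R]_m -> R) u : Ck k.+1 G -> Ck k ('D_u G).
Proof.
move=> [dG HG].
apply: Ck_ext (Ck_sum (index_enum 'I_m) (fun j => Ck_mul (Ck_cst _ _ (u 0 j)) (HG j))) => x.
by rewrite derive_lin.
Qed.

Lemma smooth_Dv m (G : 'rV[R]_m -> R) u : smooth G -> smooth ('D_u G).
Proof. by move=> sG k; apply: Ck_Dv; apply: sG. Qed.

Lemma smooth_diff m (G : 'rV[R]_m -> R) x : smooth G -> differentiable G x.
Proof. by move=> sG; case: (sG 1%N) => d _; apply: d. Qed.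

Lemma smooth_cont m (G : 'rV[R]_m -> R) : smooth G -> continuous G.
Proof. by move=> sG; apply: (Ck_cont (sG 0%N)). Qed.

Lemma schwarz_smooth m (G : 'rV[R]_m -> R) u v a : smooth G ->
  'D_v ('D_u G) a = 'D_u ('D_v G) a.
Proof.
move=> sG; apply: schwarz.
- by move=> x; apply: smooth_diff.
- by move=> x; apply: smooth_diff; apply: smooth_Dv.
- by move=> x; apply: smooth_diff; apply: smooth_Dv.
- by apply: smooth_cont; do 2 apply: smooth_Dv.
- by apply: smooth_cont; do 2 apply: smooth_Dv.
Qed.

End Schwarz.

Section Jet1.
Variables (R : realType) (p q : nat).
Implicit Types (F G : jet R p q -> R) (z : jet R p q) (S : seq (coord p q)).

Definition wvec S (c : coord p q) : 'rV[R]_(size S) :=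
  \row_k ((tnth (in_tuple S) k == c)%:R).

Lemma restrict_shift S z c t :
  restrict S (shift_coord z c t) = t *: wvec S c + restrict S z.
Proof.
apply/rowP => k; rewrite !mxE /shift_coord.
by case: eqP => _; rewrite ?mulr1 ?mulr0 ?add0r // addrC.
Qed.

Lemma derive1_line m (G : 'rV[R]_m -> R) u c :
  derive1 (fun t => G (t *: u + c)) 0 = 'D_u G c.
Proof.
rewrite derive1E /derive line_fun /=.
by rewrite scale0r add0r.
Qed.

Lemma partial_eq S (G : 'rV[R]_(size S) -> R) F c z :
  (forall z, F z = G (restrict S z)) ->
  partial c F z = 'D_(wvec S c) G (restrict S z).
Proof.
move=> HF; rewrite /partial.
have -> : (fun t => F (shift_coord z c t)) = (fun t => G (t *: wvec S c + restrict S z)).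
  by apply: funext => t; rewrite HF restrict_shift.
exact: derive1_line.
Qed.

Lemma smooth_on_mono S S' F : smooth_on S F -> {subset S <= S'} -> smooth_on S' F.
Proof.
move=> [G [sG HG]] sub.
have idx_lt (k : 'I_(size S)) : (index (tnth (in_tuple S) k) S' < size S')%N.
  by rewrite index_mem; apply: sub; apply: mem_tnth.
pose f (k : 'I_(size S)) : 'I_(size S') := Ordinal (idx_lt k).
exists (fun x => G (sel f x)); split.
  by move=> k; apply: Ck_sel; apply: sG.
move=> z; rewrite HG; congr G; apply/rowP => k; rewrite !mxE.
have kin : tnth (in_tuple S) k \in S' by apply: sub; apply: mem_tnth.
by rewrite [tnth (in_tuple S') _](tnth_nth (tnth (in_tuple S) k)) /= nth_index.
Qed.


Lemma inA_ext F1 F2 : (forall z, F1 z = F2 z) -> inA F1 -> inA F2.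
Proof. by move=> /funext ->. Qed.

Lemma inA_common F1 F2 : inA F1 -> inA F2 ->
  exists S, exists G1 : 'rV[R]_(size S) -> R, exists G2 : 'rV[R]_(size S) -> R,
   [/\ smooth G1, smooth G2, (forall z, F1 z = G1 (restrict S z)) &
       (forall z, F2 z = G2 (restrict S z))].
Proof.
move=> [S1 h1] [S2 h2].
have sub1 : {subset S1 <= S1 ++ S2} by move=> c ci; rewrite mem_cat ci.
have sub2 : {subset S2 <= S1 ++ S2} by move=> c ci; rewrite mem_cat ci orbT.
have [G1 [s1 e1]] := smooth_on_mono h1 sub1.
have [G2 [s2 e2]] := smooth_on_mono h2 sub2.
by exists (S1 ++ S2), G1, G2.
Qed.

Lemma inA_add F1 F2 : inA F1 -> inA F2 -> inA (fun z => F1 z + F2 z).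
Proof.
move=> h1 h2; have [S [G1 [G2 [s1 s2 e1 e2]]]] := inA_common h1 h2.
exists S, (fun x => G1 x + G2 x); split; first by move=> k; apply: Ck_add.
by move=> z; rewrite e1 e2.
Qed.

Lemma inA_mul F1 F2 : inA F1 -> inA F2 -> inA (fun z => F1 z * F2 z).
Proof.
move=> h1 h2; have [S [G1 [G2 [s1 s2 e1 e2]]]] := inA_common h1 h2.
exists S, (fun x => G1 x * G2 x); split; first by move=> k; apply: Ck_mul.
by move=> z; rewrite e1 e2.
Qed.

Lemma inA_cst (k : R) : inA (fun _ : jet R p q => k).
Proof. by exists [::], (fun _ => k); split => // n; apply: Ck_cst. Qed.

Lemma inA_coord d : inA (fun z : jet R p q => z d).
Proof.
exists [:: d], (fun x => x 0 ord0); split; first by move=> n; apply: Ck_coord.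
by move=> z; rewrite !mxE.
Qed.

Lemma inA_opp F : inA F -> inA (fun z => - F z).
Proof.
move=> h; apply: inA_ext (inA_mul (inA_cst (-1)) h) => z; by rewrite mulN1r.
Qed.

Lemma inA_sum (I : Type) (s : seq I) (Fs : I -> jet R p q -> R) :
  (forall i, inA (Fs i)) -> inA (fun z => \sum_(i <- s) Fs i z).
Proof.
move=> H; elim: s => [|a s IH].
  by apply: inA_ext (inA_cst 0) => z; rewrite big_nil.
by apply: inA_ext (inA_add (H a) IH) => z; rewrite big_cons.
Qed.

Lemma inA_partial c F : inA F -> inA (partial c F).
Proof.
move=> [S [G [sG e]]]; exists S, ('D_(wvec S c) G); split.
  exact: smooth_Dv.
by move=> z; apply: partial_eq.
Qed.

Lemma partial_add F1 F2 c z : inA F1 -> inA F2 ->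
  partial c (fun z => F1 z + F2 z) z = partial c F1 z + partial c F2 z.
Proof.
move=> h1 h2; have [S [G1 [G2 [s1 s2 e1 e2]]]] := inA_common h1 h2.
rewrite (partial_eq (G := G1 + G2)); last by move=> w; rewrite e1 e2.
rewrite (partial_eq _ _ e1) (partial_eq _ _ e2) deriveD //; apply: diff_derivable; exact: smooth_diff.
Qed.

Lemma partial_mul F1 F2 c z : inA F1 -> inA F2 ->
  partial c (fun z => F1 z * F2 z) z = F1 z * partial c F2 z + F2 z * partial c F1 z.
Proof.
move=> h1 h2; have [S [G1 [G2 [s1 s2 e1 e2]]]] := inA_common h1 h2.
rewrite (partial_eq (G := G1 * G2)); last by move=> w; rewrite e1 e2.
rewrite (partial_eq _ _ e1) (partial_eq _ _ e2) deriveM ?e1 ?e2 //;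
  apply: diff_derivable; exact: smooth_diff.
Qed.

Lemma partial_cst (k : R) c z : partial c (fun _ : jet R p q => k) z = 0.
Proof. by rewrite /partial derive1_cst. Qed.

Lemma partial_coord c d z : partial c (fun z : jet R p q => z d) z = (d == c)%:R.
Proof.
rewrite (partial_eq (S := [:: d]) (G := @coordf R 1 ord0)); last by move=> w; rewrite /coordf mxE.
by rewrite (coordf_diff _ _).2 mxE.
Qed.

Lemma partial_comm F c d z : inA F -> partial c (partial d F) z = partial d (partial c F) z.
Proof.
move=> [S [G [sG e]]].
rewrite (partial_eq (G := 'D_(wvec S d) G)); last by move=> w; apply: partial_eq.
rewrite (partial_eq (G := 'D_(wvec S c) G)); last by move=> w; apply: partial_eq.
exact: schwarz_smooth.
Qed.

Lemma smooth_on_dep S F : smooth_on S F -> depends_on S F.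
Proof.
move=> [G [_ e]] z w H; rewrite !e; congr G; apply/rowP => k; rewrite !mxE.
by apply: H; apply: mem_tnth.
Qed.

Lemma dep_mono S S' F : depends_on S F -> {subset S <= S'} -> depends_on S' F.
Proof. by move=> H sub z w E; apply: H => c cS; apply: E; apply: sub. Qed.

Lemma dep_partial S F c : depends_on S F -> depends_on S (partial c F).
Proof.
move=> H z w E; rewrite /partial.
have -> : (fun t => F (shift_coord z c t)) = (fun t => F (shift_coord w c t)) => //.
apply: funext => t; apply: H => d dS; rewrite /shift_coord E //.
Qed.

Lemma partial_out S F c z : depends_on S F -> c \notin S -> partial c F z = 0.
Proof.
move=> H cS; rewrite /partial.
have -> : (fun t => F (shift_coord z c t)) = (fun _ => F z).
  apply: funext => t; apply: H => d dS; rewrite /shift_coord.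
  by case: eqP => // E; move: cS; rewrite -E dS.
exact: derive1_cst.
Qed.

Lemma dep_supp F : inA F -> depends_on (supp F) F.
Proof.
move=> [S hS]; rewrite /supp; case: pselect => [h|[]]; last first.
  by exists S; apply: smooth_on_dep.
by case: (cid h).
Qed.


Lemma partial_ext F1 F2 c z : (forall z, F1 z = F2 z) -> partial c F1 z = partial c F2 z.
Proof. by move=> /funext ->. Qed.

Lemma partial_sum (I : Type) (s : seq I) (Fs : I -> jet R p q -> R) c z :
  (forall i, inA (Fs i)) ->
  partial c (fun z => \sum_(i <- s) Fs i z) z = \sum_(i <- s) partial c (Fs i) z.
Proof.
move=> H; elim: s => [|a s IH].
  by rewrite big_nil (partial_ext _ _ (F2 := fun _ => 0)) ?partial_cst // => w; rewrite big_nil.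
rewrite big_cons (partial_ext _ _ (F2 := fun z => Fs a z + \sum_(i <- s) Fs i z)).
  by rewrite partial_add ?IH //; apply: inA_sum.
by move=> w; rewrite big_cons.
Qed.

End Jet1.


Lemma sum_sub (R : nmodType) (T : eqType) (s t : seq T) (f : T -> R) :
  uniq s -> uniq t -> {subset s <= t} -> (forall x, x \in t -> x \notin s -> f x = 0) ->
  \sum_(x <- s) f x = \sum_(x <- t) f x.
Proof.
move=> us ut sub z0.
rewrite [RHS](bigID (fun x => x \in s)) /= [X in _ + X]big1_seq ?addr0; last first.
  by move=> x /andP[xs xt]; apply: z0.
rewrite -[\sum_(i <- t | _) _]big_filter; apply: perm_big; apply: uniq_perm => //.
  exact: filter_uniq.
by move=> x; rewrite mem_filter; apply/idP/andP => [xs|[]//]; split => //; apply: sub.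
Qed.

Lemma sum_pick (R : pzSemiRingType) (T : eqType) (s : seq T) (f : T -> R) x :
  uniq s -> x \in s -> \sum_(c <- s) f c * (x == c)%:R = f x.
Proof.
move=> us xs; rewrite -(sum_sub (s := [:: x])) //.
- by rewrite big_seq1 eqxx mulr1.
- by move=> c; rewrite inE => /eqP ->.
- by move=> c _; rewrite inE eq_sym => /negPf ->; rewrite mulr0.
Qed.

Section Jet2.
Variables (R : realType) (p q : nat).
Implicit Types (F G : jet R p q -> R) (z : jet R p q) (S T : seq (coord p q)).

Definition acoef (i : 'I_p) (c : coord p q) : jet R p q -> R :=
  match c with
  | inl k => fun _ => (k == i)%:R
  | inr jK => fun z => z (inr (jK.1, madd jK.2 (munit i)))
  end.

Definition sh (i : 'I_p) (c : coord p q) : coord p q :=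
  match c with
  | inl k => inl k
  | inr jK => inr (jK.1, madd jK.2 (munit i))
  end.

Lemma inA_acoef i c : inA (acoef i c).
Proof. by case: c => [k|jK] /=; [apply: inA_cst | apply: inA_coord]. Qed.

Lemma partial_acoef c i d z :
  partial c (acoef i d) z = (if d is inr _ then (sh i d == c)%:R else 0).
Proof. by case: d => [k|jK] /=; [apply: partial_cst | apply: partial_coord]. Qed.

Definition gterm i F z (c : coord p q) : R :=
  match c with
  | inl _ => 0
  | inr jK => z (inr (jK.1, madd jK.2 (munit i))) * partial c F z
  end.

Lemma Dtot_formula i F T z : inA F -> depends_on T F -> uniq T ->
  Dtot i F z = \sum_(c <- T) acoef i c z * partial c F z.
Proof.
move=> hF dT uT.
have dS := dep_supp hF.
set S0 := supp F in dS *.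
set U := undup (S0 ++ T).
have uU : uniq U by apply: undup_uniq.
have zS c : c \notin S0 -> partial c F z = 0 by move=> cS; apply: (partial_out _ dS).
have e1 : \sum_(c <- undup S0) gterm i F z c = \sum_(c <- U) gterm i F z c.
  apply: sum_sub => //; first exact: undup_uniq.
    by move=> c; rewrite !mem_undup mem_cat => ->.
  move=> c _; rewrite mem_undup => /zS; case: c => [//|jK] /= ->; by rewrite mulr0.
have e2 : \sum_(c <- T) acoef i c z * partial c F z = \sum_(c <- U) acoef i c z * partial c F z.
  apply: sum_sub => //.
    by move=> c cT; rewrite mem_undup mem_cat cT orbT.
  by move=> c _ cT; rewrite (partial_out _ dT cT) mulr0.
rewrite e2.
have e3 : \sum_(c <- U) acoef i c z * partial c F z =
          \sum_(c <- U) ((inl i == c)%:R * partial c F z + gterm i F z c).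
  apply: eq_bigr => c _; case: c => [k|jK] /=; last by rewrite mul0r add0r.
  by rewrite addr0 (_ : (inl i == inl k :> coord p q) = (i == k)) // eq_sym.
rewrite e3 big_split /= -e1.
congr (_ + _); rewrite /Dtot.
  case: (boolP (inl i \in U)) => iU.
    under eq_bigr => c _ do rewrite mulrC.
    by rewrite sum_pick.
  rewrite big1_seq; last first.
    by move=> c /andP[_ cU]; case: eqP => [E|]; [rewrite E cU in iU | rewrite mul0r].
  rewrite zS // ; apply: contra iU; rewrite mem_undup mem_cat => ->; done.
Qed.


End Jet2.

Section Jet3.
Variables (R : realType) (p q : nat).
Implicit Types (F G : jet R p q -> R) (z : jet R p q) (S T : seq (coord p q)).
Lemma dep_op2 S F1 F2 (op : R -> R -> R) : depends_on S F1 -> depends_on S F2 ->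
  depends_on S (fun z => op (F1 z) (F2 z)).
Proof. by move=> h1 h2 z w E; rewrite (h1 z w E) (h2 z w E). Qed.

Lemma dep_cst S (k : R) : depends_on S (fun _ : jet R p q => k).
Proof. by []. Qed.

Lemma dep_undup S F : depends_on S F -> depends_on (undup S) F.
Proof. by move=> h; apply: (dep_mono h) => c; rewrite mem_undup. Qed.

Lemma dep_catl S S' F : depends_on S F -> depends_on (S ++ S') F.
Proof. by move=> h; apply: (dep_mono h) => c cS; rewrite mem_cat cS. Qed.

Lemma dep_catr S S' F : depends_on S' F -> depends_on (S ++ S') F.
Proof. by move=> h; apply: (dep_mono h) => c cS; rewrite mem_cat cS orbT. Qed.

Lemma inA_dep F : inA F -> exists T, depends_on T F /\ uniq T.
Proof.
move=> hF; exists (undup (supp F)); split; last exact: undup_uniq.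
exact/dep_undup/dep_supp.
Qed.

Lemma inA_Dtot i F : inA F -> inA (Dtot i F).
Proof.
move=> hF; have [T [dT uT]] := inA_dep hF.
have hS := inA_sum (Fs := fun c z => acoef i c z * partial c F z) T
  (fun c => inA_mul (@inA_acoef R p q i c) (inA_partial c hF)).
apply: (inA_ext _ hS) => z.
by rewrite (Dtot_formula _ _ hF dT uT).
Qed.

Lemma Dtot_ext i F1 F2 z : (forall z, F1 z = F2 z) -> Dtot i F1 z = Dtot i F2 z.
Proof. by move=> /funext ->. Qed.

Lemma Dtot_add i F1 F2 z : inA F1 -> inA F2 ->
  Dtot i (fun z => F1 z + F2 z) z = Dtot i F1 z + Dtot i F2 z.
Proof.
move=> h1 h2.
set T := undup (supp F1 ++ supp F2).
have uT : uniq T by apply: undup_uniq.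
have d1 : depends_on T F1 by apply/dep_undup/dep_catl/dep_supp.
have d2 : depends_on T F2 by apply/dep_undup/dep_catr/dep_supp.
rewrite (Dtot_formula i z (inA_add h1 h2) (dep_op2 +%R d1 d2) uT).
rewrite (Dtot_formula i z h1 d1 uT) (Dtot_formula i z h2 d2 uT).
rewrite -big_split /=; apply: eq_bigr => c _.
by rewrite partial_add // mulrDr.
Qed.

Lemma Dtot_mul i F1 F2 z : inA F1 -> inA F2 ->
  Dtot i (fun z => F1 z * F2 z) z = F1 z * Dtot i F2 z + F2 z * Dtot i F1 z.
Proof.
move=> h1 h2.
set T := undup (supp F1 ++ supp F2).
have uT : uniq T by apply: undup_uniq.
have d1 : depends_on T F1 by apply/dep_undup/dep_catl/dep_supp.
have d2 : depends_on T F2 by apply/dep_undup/dep_catr/dep_supp.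
rewrite (Dtot_formula i z (inA_mul h1 h2) (dep_op2 *%R d1 d2) uT).
rewrite (Dtot_formula i z h1 d1 uT) (Dtot_formula i z h2 d2 uT).
rewrite !big_distrr -big_split /=; apply: eq_bigr => c _.
by rewrite partial_mul // mulrDr; congr (_ + _); rewrite mulrCA.
Qed.

Lemma Dtot_cst i (k : R) z : Dtot i (fun _ : jet R p q => k) z = 0.
Proof.
by rewrite (Dtot_formula i z (inA_cst p q k) (dep_cst (S := [::]) k)) ?big_nil.
Qed.

Lemma Dtot_sum i (I : Type) (s : seq I) (Fs : I -> jet R p q -> R) z :
  (forall k, inA (Fs k)) ->
  Dtot i (fun z => \sum_(k <- s) Fs k z) z = \sum_(k <- s) Dtot i (Fs k) z.
Proof.
move=> H; elim: s => [|a s IH].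
  by rewrite big_nil (Dtot_ext _ _ (F2 := fun _ => 0)) ?Dtot_cst // => w; rewrite big_nil.
rewrite big_cons (Dtot_ext _ _ (F2 := fun z => Fs a z + \sum_(k <- s) Fs k z)).
  by rewrite Dtot_add ?IH //; apply: inA_sum.
by move=> w; rewrite big_cons.
Qed.

Lemma Dtot_scale i (k : R) F z : inA F -> Dtot i (fun z => k * F z) z = k * Dtot i F z.
Proof. by move=> h; rewrite Dtot_mul ?Dtot_cst ?mulr0 ?addr0 //; apply: inA_cst. Qed.

Lemma Dtot_sub i F1 F2 z : inA F1 -> inA F2 ->
  Dtot i (fun z => F1 z - F2 z) z = Dtot i F1 z - Dtot i F2 z.
Proof.
move=> h1 h2.
rewrite (Dtot_ext _ _ (F2 := fun z => F1 z + (-1) * F2 z)); last by move=> w; rewrite mulN1r.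
rewrite Dtot_add ?Dtot_scale ?mulN1r //.
by apply: inA_mul => //; apply: inA_cst.
Qed.


End Jet3.

Section Jet4.
Variables (R : realType) (p q : nat).
Implicit Types (F G : jet R p q -> R) (z : jet R p q) (S T : seq (coord p q)).

Definition yterm (i j : 'I_p) (d : coord p q) (z : jet R p q) : R :=
  if d is inr _ then acoef i (sh j d) z else 0.

Lemma Dtot2 i j F z : inA F ->
  Dtot i (Dtot j F) z =
  \sum_(c <- undup (supp F)) \sum_(d <- undup (supp F))
     acoef i c z * acoef j d z * partial c (partial d F) z +
  \sum_(d <- undup (supp F)) partial d F z * yterm i j d z.
Proof.
move=> hF; set T := undup (supp F).
have uT : uniq T by apply: undup_uniq.
have dT : depends_on T F by apply/dep_undup/dep_supp.
pose H := fun z => \sum_(d <- T) acoef j d z * partial d F z.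
have hH : inA H.
  exact: (inA_sum (Fs := fun d z => acoef j d z * partial d F z) T
           (fun d => inA_mul (@inA_acoef R p q j d) (inA_partial d hF))).
rewrite (Dtot_ext _ _ (F2 := H)); last by move=> w; apply: Dtot_formula.
set U := undup (T ++ map (sh i) T ++ map (sh j) T).
have uU : uniq U by apply: undup_uniq.
have TU : {subset T <= U} by move=> c cT; rewrite mem_undup mem_cat cT.
have shU d : d \in T -> sh j d \in U.
  by move=> dT'; rewrite mem_undup !mem_cat (map_f (sh j) dT') !orbT.
have dH : depends_on U H.
  move=> z1 z2 E; apply: eq_big_seq => d dT'; congr (_ * _).
    case: d dT' => [k|jK] dT' //=.
    by apply: E; apply: (shU _ dT').
  apply: (dep_partial d (dep_mono dT TU)) => c cU; exact: E.
rewrite (Dtot_formula i z hH dH uU).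
have eP c : partial c H z = \sum_(d <- T)
    (acoef j d z * partial c (partial d F) z + partial d F z * partial c (acoef j d) z).
  rewrite /H partial_sum; last first.
    by move=> d; apply: inA_mul; [apply: inA_acoef | apply: inA_partial].
  apply: eq_bigr => d _; rewrite partial_mul //; [apply: inA_acoef | exact: inA_partial].

have E : \sum_(c <- U) acoef i c z * partial c H z =
   \sum_(c <- U) \sum_(d <- T) acoef i c z * (acoef j d z * partial c (partial d F) z) +
   \sum_(c <- U) \sum_(d <- T) acoef i c z * (partial d F z * partial c (acoef j d) z).
  rewrite -big_split; apply: eq_bigr => c _; rewrite eP big_distrr -big_split.
  by apply: eq_bigr => d _; exact: mulrDr.
rewrite E; congr (_ + _).
  rewrite -(sum_sub uT uU TU); first by apply: eq_bigr => c _; apply: eq_bigr => d _; rewrite mulrA.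
  move=> c _ cT; apply: big1 => d _.
  by rewrite (partial_out _ (dep_partial d dT) cT) !mulr0.
rewrite exchange_big /=; apply: eq_big_seq => d dT'; rewrite /yterm.
under eq_bigr => c _ do rewrite partial_acoef.
case: d dT' => [k|jK] dT'.
  by rewrite mulr0; apply: big1 => c _; rewrite !mulr0.
under eq_bigr => c _ do rewrite mulrCA.
by rewrite -big_distrr sum_pick //; apply: (shU _ dT').
Qed.



Lemma madd_comm3 (K : mindex p) a b : madd (madd K a) b = madd (madd K b) a.
Proof. by apply/ffunP => t; rewrite !ffunE addnAC. Qed.

Lemma Dtot_comm i j F z : inA F -> Dtot i (Dtot j F) z = Dtot j (Dtot i F) z.
Proof.
move=> hF; rewrite !Dtot2 //; congr (_ + _).
  rewrite exchange_big /=; apply: eq_bigr => c _; apply: eq_bigr => d _.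
  by rewrite partial_comm // [acoef i d z * _]mulrC.
apply: eq_bigr => -[k|jK] _ //=.
by rewrite /yterm /= madd_comm3.
Qed.

Lemma Dtot_commf i j F : inA F -> Dtot i (Dtot j F) = Dtot j (Dtot i F).
Proof. by move=> hF; apply: funext => z; apply: Dtot_comm. Qed.

End Jet4.

Section Jet5.
Variables (R : realType) (p q : nat).
Implicit Types (F G : jet R p q -> R) (z : jet R p q).

Definition Dl (s : seq 'I_p) F := foldr (fun i G => Dtot i G) F s.

Lemma inA_Dl s F : inA F -> inA (Dl s F).
Proof. by move=> hF; elim: s => [|a s IH] //=; apply: inA_Dtot. Qed.

Lemma Dl_cat s t F : Dl (s ++ t) F = Dl s (Dl t F).
Proof. by rewrite /Dl foldr_cat. Qed.

Lemma Dl_rem a t F : inA F -> a \in t -> Dl t F = Dtot a (Dl (rem a t) F).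
Proof.
move=> hF; elim: t => [//|b t IH] at' /=.
have [->|ne] := eqVneq b a; first by [].
rewrite ?(negPf ne) /=.
have at2 : a \in t by move: at'; rewrite inE eq_sym (negPf ne).
rewrite IH // Dtot_commf //; exact: inA_Dl.
Qed.

Lemma Dl_perm s t F : inA F -> perm_eq s t -> Dl s F = Dl t F.
Proof.
move=> hF; elim: s t => [|a s IH] t pst.
  by move: pst; rewrite perm_sym => /perm_nilP ->.
have at' : a \in t by rewrite -(perm_mem pst) mem_head.
rewrite (Dl_rem hF at') /= (IH (rem a t)) //.
by rewrite -(perm_cons a); apply: (perm_trans pst); apply: perm_to_rem.
Qed.

Definition klist (K : mindex p) (s : seq 'I_p) := flatten [seq nseq (K i) i | i <- s].

Lemma iter_Dl n i F : iter n (Dtot i) F = Dl (nseq n i) F.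
Proof. by elim: n => [|n IH] //=; rewrite IH. Qed.

Lemma DK_Dl K F : DK K F = Dl (klist K (enum 'I_p)) F.
Proof.
rewrite /DK /klist; elim: (enum 'I_p) => [|a s IH] //=.
by rewrite Dl_cat -IH iter_Dl.
Qed.

Lemma klist_madd K L s : perm_eq (klist (madd K L) s) (klist K s ++ klist L s).
Proof.
apply/permP => P; rewrite count_cat /klist.
elim: s => [|a s IH] //=; rewrite !count_cat IH ffunE nseqD count_cat.
by rewrite addnACA.
Qed.

Lemma DK_madd K L F : inA F -> DK (madd K L) F = DK K (DK L F).
Proof.
move=> hF; rewrite !DK_Dl -Dl_cat; apply: Dl_perm => //; exact: klist_madd.
Qed.

Lemma inA_DK K F : inA F -> inA (DK K F).
Proof. by move=> hF; rewrite DK_Dl; apply: inA_Dl. Qed.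

Lemma DK_unit i F : inA F -> DK (munit i) F = Dtot i F.
Proof.
move=> hF; rewrite DK_Dl (Dl_perm (t := [:: i])) //.
apply/permP => P; rewrite /klist /=.
have : (count P (flatten [seq nseq (munit i j) j | j <- enum 'I_p]) =
       \sum_(j <- enum 'I_p) (P j * (j == i)))%N.
  elim: (enum 'I_p) => [|a s IH] /=; first by rewrite big_nil.
  by rewrite count_cat IH big_cons ffunE count_nseq.
move=> ->; rewrite (bigD1_seq i) ?mem_enum ?enum_uniq //= eqxx muln1 big1 ?addn0 //.
by move=> j /negPf ->; rewrite muln0.
Qed.

Lemma Dl_sub s F1 F2 z : inA F1 -> inA F2 ->
  Dl s (fun z => F1 z - F2 z) z = Dl s F1 z - Dl s F2 z.
Proof.
move=> h1 h2; elim: s z => [//|a s IH] z /=.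
rewrite (Dtot_ext _ _ (F2 := fun z => Dl s F1 z - Dl s F2 z)) //.
by rewrite Dtot_sub //; apply: inA_Dl.
Qed.

Lemma DK_sub K F1 F2 z : inA F1 -> inA F2 ->
  DK K (fun z => F1 z - F2 z) z = DK K F1 z - DK K F2 z.
Proof. by move=> h1 h2; rewrite !DK_Dl Dl_sub. Qed.

End Jet5.

Section Ideal.
Variables (R : realType) (p q n : nat) (ia : 'I_n -> 'I_q) (Ja : 'I_n -> mindex p)
          (P : 'I_n -> jet R p q -> R).
Implicit Types (F G Q : jet R p q -> R) (z : jet R p q).

Hypothesis inA_P : forall a, inA (P a).

Lemma inA_Delta a : inA (Delta ia Ja P a).
Proof.
apply: (inA_ext (F1 := fun z => z (inr (ia a, Ja a)) + - P a z)) => //.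
by apply: inA_add; [apply: inA_coord | apply: inA_opp].
Qed.

Lemma in_ideal_ext Q1 Q2 : (forall z, Q1 z = Q2 z) -> in_ideal ia Ja P Q1 -> in_ideal ia Ja P Q2.
Proof. by move=> /funext ->. Qed.

Lemma in_ideal0 : in_ideal ia Ja P (fun _ => 0).
Proof.
exists 0%N, (fun _ _ => 0), (fun k : 'I_0 => False_rect _ (Bool.diff_true_false (etrans (esym (ltn_ord k)) (ltn0 k)))),
  (fun _ => 0).
by split => [[]|z]; rewrite ?big_ord0.
Qed.

Lemma split_l m1 m2 (k : 'I_m1) : fintype.split (lshift m2 k) = inl k.
Proof. exact: (unsplitK (inl k : 'I_m1 + 'I_m2)). Qed.
Lemma split_r m1 m2 (k : 'I_m2) : fintype.split (rshift m1 k) = inr k.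
Proof. exact: (unsplitK (inr k : 'I_m1 + 'I_m2)). Qed.

Lemma in_ideal_add Q1 Q2 : in_ideal ia Ja P Q1 -> in_ideal ia Ja P Q2 ->
  in_ideal ia Ja P (fun z => Q1 z + Q2 z).
Proof.
move=> [m1 [c1 [al1 [L1 [h1 e1]]]]] [m2 [c2 [al2 [L2 [h2 e2]]]]].
exists (m1 + m2)%N,
  (fun k => match fintype.split k with inl k1 => c1 k1 | inr k2 => c2 k2 end),
  (fun k => match fintype.split k with inl k1 => al1 k1 | inr k2 => al2 k2 end),
  (fun k => match fintype.split k with inl k1 => L1 k1 | inr k2 => L2 k2 end).
split => [k|z]; first by case: (fintype.split k).
by rewrite big_split_ord /= e1 e2; congr (_ + _); apply: eq_bigr => k _;
  rewrite ?split_l ?split_r.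
Qed.

Lemma in_ideal_mul f Q : inA f -> in_ideal ia Ja P Q -> in_ideal ia Ja P (fun z => f z * Q z).
Proof.
move=> hf [m [c [al [L [h e]]]]].
exists m, (fun k z => f z * c k z), al, L; split => [k|z]; first exact: inA_mul.
by rewrite e big_distrr; apply: eq_bigr => k _; exact: mulrA.
Qed.

Lemma in_ideal_gen a L : in_ideal ia Ja P (DK L (Delta ia Ja P a)).
Proof.
exists 1%N, (fun _ _ => 1), (fun _ => a), (fun _ => L); split => [k|z].
  exact: inA_cst.
by rewrite big_ord1 mul1r.
Qed.

Lemma in_ideal_sum (m : nat) (Fs : 'I_m -> jet R p q -> R) :
  (forall k, in_ideal ia Ja P (Fs k)) -> in_ideal ia Ja P (fun z => \sum_(k < m) Fs k z).
Proof.
move=> H; elim: (index_enum 'I_m) => [|a s IH].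
  by apply: in_ideal_ext in_ideal0 => z; rewrite big_nil.
by apply: in_ideal_ext (in_ideal_add (H a) IH) => z; rewrite big_cons.
Qed.

Lemma in_ideal_Dtot i Q : in_ideal ia Ja P Q -> in_ideal ia Ja P (Dtot i Q).
Proof.
move=> [m [c [al [L [h e]]]]].
have hD k : inA (DK (L k) (Delta ia Ja P (al k))) by apply: inA_DK; apply: inA_Delta.
apply: (in_ideal_ext (Q1 := fun z => \sum_(k < m)
   (c k z * DK (madd (munit i) (L k)) (Delta ia Ja P (al k)) z +
    DK (L k) (Delta ia Ja P (al k)) z * Dtot i (c k) z))).
  move=> z; rewrite (Dtot_ext _ _ (F2 := fun z => \sum_(k < m) c k z * DK (L k) (Delta ia Ja P (al k)) z)) //.
  rewrite Dtot_sum; last by move=> k; apply: inA_mul.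
  apply: eq_bigr => k _; rewrite Dtot_mul //.
  by rewrite DK_madd ?DK_unit //; try exact: hD; exact: inA_Delta.
apply: in_ideal_sum => k; apply: in_ideal_add.
  exact: in_ideal_mul (in_ideal_gen _ _).
rewrite /=; apply: (in_ideal_ext (Q1 := fun z => Dtot i (c k) z * DK (L k) (Delta ia Ja P (al k)) z)).
  by move=> z; rewrite mulrC.
exact: in_ideal_mul (inA_Dtot _ (h k)) (in_ideal_gen _ _).
Qed.

Lemma in_ideal_DK K Q : in_ideal ia Ja P Q -> in_ideal ia Ja P (DK K Q).
Proof.
move=> hQ; rewrite DK_Dl; elim: (klist K (enum 'I_p)) => [//|a s IH] /=.
exact: in_ideal_Dtot.
Qed.

End Ideal.


Theorem proposition1 (R : realType) (p q n : nat)
  (ia : 'I_n -> 'I_q) (Ja : 'I_n -> mindex p) (P : 'I_n -> jet R p q -> R)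
  (rk : rel ('I_q * mindex p)) :
  passive_orthonomic ia Ja P rk ->
  unique_reduced_forms ia Ja P ->
  forall (K L : mindex p) (F : jet R p q -> R), inB ia Ja F ->
  forall R1 R2 R3 : jet R p q -> R,
    reduced_form ia Ja P (DK L F) R1 ->            (* R1 = frakD_L F *)
    reduced_form ia Ja P (DK K R1) R2 ->           (* R2 = frakD_K (frakD_L F) *)
    reduced_form ia Ja P (DK (madd K L) F) R3 ->   (* R3 = frakD_(K+L) F *)
    R2 = R3.
Proof.
move=> [_ _ Hi _] Hu K L F hF R1 R2 R3 [hR1 I1] [hR2 I2] [hR3 I3].
have inAP a : inA (P a) by have [S [_ h]] := Hi a; exists S.
have AB (G : jet R p q -> R) : inB ia Ja G -> inA G by case=> S [_ h]; exists S.
have hFA := AB _ hF.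
have hR1A := AB _ hR1.
have hQ : inA (DK (madd K L) F) by apply: inA_DK.
have [Rf [_ Hun]] := Hu _ hQ.
have E3 : R3 = Rf by apply: Hun; split.
rewrite E3; apply: Hun; split; first exact: hR2.
apply: (in_ideal_ext (Q1 := fun z => DK K (fun z => DK L F z - R1 z) z + (DK K R1 z - R2 z))).
  move=> z /=; rewrite DK_sub //; last exact: inA_DK.
  have E := congr1 (fun f => f z) (DK_madd K L hFA); rewrite /= in E; rewrite E.
  by rewrite addrA subrK.
apply: (in_ideal_add (Q1 := DK K (fun z => DK L F z - R1 z)) (Q2 := fun z => DK K R1 z - R2 z)) => //.
exact: (in_ideal_DK inAP).
Qed.
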